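(* Assume $\nu>1/2$ and let $b,\theta>0$ be fixed. For any continuous function $F:\mathbb R\to[0,\infty)$ with $0<\int_{-\infty}^\infty F(x)\,dx<\infty$, as $\delta\to0$, $$\int_{-\pi}^{\pi}a^\delta_{b,\theta}(\lambda)\,F\!\Big(\frac{\lambda}{\delta\theta}\Big)d\lambda\sim\delta\theta\int_{-\infty}^{\infty}F(x)\,dx,\qquad \int_{-\pi}^{\pi}\big[a^\delta_{b,\theta}(\lambda)\big]^2F\!\Big(\frac{\lambda}{\delta\theta}\Big)d\lambda\sim\delta\theta\int_{-\infty}^{\infty}F(x)\,dx.$$
   Context: For $\alpha>0$, $\omega\in\mathbb R$ let $g^*_{\nu,\alpha}(\omega)=C_\nu\alpha^{2\nu}(\alpha^2+\omega^2)^{-(\nu+1/2)}$ with $C_\nu=\Gamma(\nu+\frac12)/(\sqrt\pi\,\Gamma(\nu))$. For $\delta,\theta>0$ and $\lambda\in[-\pi,\pi]$ let $g^\delta_{\nu,\theta}(\lambda)=\sum_{k\in\mathbb Z}g^*_{\nu,\delta\theta}(\lambda+2k\pi)$, and for $b>0$, $a^\delta_{b,\theta}=\dfrac{b\,g^\delta_{\nu,\theta}}{b\,g^\delta_{\nu,\theta}+(2\pi)^{-1}}$. ''$\sim$'' means the ratio tends to $1$. *)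

(* Defs.v *)
From Stdlib Require Import Reals Lra ClassicalEpsilon.
Open Scope R_scope.

Definition RInt_is (f : R -> R) (a b v : R) : Prop :=
  exists pr : Riemann_integrable f a b, RiemannInt pr = v.

Definition RInt (f : R -> R) (a b : R) : R :=
  epsilon (inhabits 0) (fun v => RInt_is f a b v).

Definition improper_0_inf (f : R -> R) (l : R) : Prop :=
  forall eps, 0 < eps -> exists m, 0 < m /\ exists M,
    forall a b, 0 < a -> a < m -> M < b ->
      exists v, RInt_is f a b v /\ Rabs (v - l) < eps.

Definition improper_R (f : R -> R) (l : R) : Prop :=
  forall eps, 0 < eps -> exists M,
    forall a b, a < - M -> M < b ->
      exists v, RInt_is f a b v /\ Rabs (v - l) < eps.

Definition Gamma (x : R) : R :=
  epsilon (inhabits 0)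
    (fun l => improper_0_inf (fun t => Rpower t (x - 1) * exp (- t)) l).

Definition zsum (f : Z -> R) : R :=
  epsilon (inhabits 0)
    (fun l => infinite_sum (fun n => f (Z.of_nat n) + f (- (Z.of_nat n + 1))%Z) l).

Definition C_nu (nu : R) : R := Gamma (nu + 1/2) / (sqrt PI * Gamma nu).

Definition gstar (nu alpha omega : R) : R :=
  C_nu nu * Rpower alpha (2 * nu) * Rpower (alpha ^ 2 + omega ^ 2) (- (nu + 1/2)).

Definition gdelta (nu delta theta lambda : R) : R :=
  zsum (fun k => gstar nu (delta * theta) (lambda + 2 * IZR k * PI)).

Definition adelta (nu b delta theta lambda : R) : R :=
  b * gdelta nu delta theta lambda / (b * gdelta nu delta theta lambda + / (2 * PI)).

Definition equiv0 (u v : R -> R) : Prop :=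
  forall eps, 0 < eps -> exists eta, 0 < eta /\
    forall delta, 0 < delta -> delta < eta -> Rabs (u delta / v delta - 1) < eps.

(* Main.v *)
Require Import Defs.
From Stdlib Require Import Reals Lra Lia ClassicalEpsilon FunctionalExtensionality Classical.
Open Scope R_scope.


Lemma RInt_is_unique f a b v1 v2 : RInt_is f a b v1 -> RInt_is f a b v2 -> v1 = v2.
Proof. intros [p1 e1] [p2 e2]. subst. apply RiemannInt_P5. Qed.

Lemma RInt_eq f a b v : RInt_is f a b v -> RInt f a b = v.
Proof.
  intros H. unfold RInt.
  pose proof (epsilon_spec (inhabits 0) (fun v => RInt_is f a b v) (ex_intro _ v H)) as H1.
  eapply RInt_is_unique; eauto.
Qed.

Lemma RInt_is_cont f a b : a <= b -> (forall x, a <= x <= b -> continuity_pt f x) ->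
  exists v, RInt_is f a b v.
Proof. intros h C. exists (RiemannInt (continuity_implies_RiemannInt h C)). eexists; eauto. Qed.

Lemma RInt_chasles f a b c v1 v2 : RInt_is f a b v1 -> RInt_is f b c v2 -> RInt_is f a c (v1 + v2).
Proof.
  intros [p1 e1] [p2 e2]. exists (RiemannInt_P24 p1 p2). subst. symmetry; apply RiemannInt_P26.
Qed.

Lemma RInt_le f g a b v w : a <= b -> RInt_is f a b v -> RInt_is g a b w ->
  (forall x, a < x < b -> f x <= g x) -> v <= w.
Proof. intros h [p1 e1] [p2 e2] H. subst. apply RiemannInt_P19; auto. Qed.

Lemma RInt_const c a b : RInt_is (fun _ => c) a b (c * (b - a)).
Proof. exists (RiemannInt_P14 a b c). apply RiemannInt_P15. Qed.

Lemma RInt_ext f g a b v : (forall x, f x = g x) -> RInt_is f a b v -> RInt_is g a b v.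
Proof. intros H. replace g with f; auto. apply functional_extensionality; auto. Qed.

Lemma FTC_loc f g a b : a <= b -> (forall x, a <= x <= b -> continuity_pt f x) ->
  antiderivative f g a b -> RInt_is f a b (g b - g a).
Proof.
  intros h C A.
  exists (continuity_implies_RiemannInt h C).
  rewrite (RiemannInt_P20 h (FTC_P1 h C)).
  destruct (antiderivative_Ucte _ _ _ _ _ (RiemannInt_P29 h C) A) as [c Hc].
  rewrite (Hc b), (Hc a); lra.
Qed.

Lemma RInt_le2 f g a b v w : RInt_is f a b v -> RInt_is g a b w -> a <= b ->
  (forall x, a < x < b -> f x <= g x) -> v <= w.
Proof. intros; eapply RInt_le; eauto. Qed.

Lemma dlim_ext f g x l1 l2 : (forall y, f y = g y) -> l1 = l2 ->
  derivable_pt_lim f x l1 -> derivable_pt_lim g x l2.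
Proof. intros H e. replace g with f by (apply functional_extensionality; auto). subst; auto. Qed.

Lemma dlim_divh h x : h <> 0 -> derivable_pt_lim (fun l => l / h) x (/ h).
Proof.
  intros Hh. eapply dlim_ext with (f := (id * fct_cte (/h))%F); [ | | apply derivable_pt_lim_mult].
  - intros y; unfold mult_fct, id, fct_cte; unfold Rdiv; ring.
  - shelve.
  - apply derivable_pt_lim_id.
  - apply derivable_pt_lim_const.
  Unshelve. unfold id, fct_cte; ring.
Qed.

Lemma cont_divh h x : h <> 0 -> continuity_pt (fun l => l / h) x.
Proof. intros Hh. apply derivable_continuous_pt. exists (/h). apply dlim_divh; auto. Qed.

Lemma RInt_cv F h al be v : 0 < h -> al <= be -> continuity F ->
  RInt_is F (al/h) (be/h) v -> RInt_is (fun l => F (l/h)) al be (h*v).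
Proof.
  intros Hh Hab HF Hv.
  assert (hab : al/h <= be/h) by (apply Rmult_le_compat_r; [left; apply Rinv_0_lt_compat|]; lra).
  destruct (RiemannInt_P30 hab (fun x _ => HF x)) as [G HG].
  pose proof (FTC_loc F G _ _ hab (fun x _ => HF x) HG) as HG2.
  rewrite (RInt_is_unique _ _ _ _ _ Hv HG2).
  replace (h * (G (be/h) - G (al/h))) with (h * G (be/h) - h * G (al/h)) by ring.
  apply (FTC_loc _ (fun l => h * G (l/h))); auto.
  - intros x _. apply (continuity_pt_comp (fun l => l/h) F). apply cont_divh; lra. apply HF.
  - split; auto. intros x Hx.
    assert (Hx' : al/h <= x/h <= be/h).
    { split; apply Rmult_le_compat_r; try (left; apply Rinv_0_lt_compat); lra. }
    destruct HG as [HG _]. destruct (HG _ Hx') as [pr Hpr].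
    assert (D0 := derive_pt_eq_1 _ _ _ pr (eq_sym Hpr)).
    assert (D : derivable_pt_lim (fun l => h * G (l / h)) x (F (x/h))).
    { eapply dlim_ext with (f := comp (mult_real_fct h G) (fun l => l/h)).
      - intros y; reflexivity.
      - shelve.
      - apply derivable_pt_lim_comp. apply dlim_divh; lra.
        apply derivable_pt_lim_scal. exact D0.
      Unshelve. field. lra. }
    exists (exist _ _ D). reflexivity.
Qed.

Lemma RInt_scal f a b k v : RInt_is f a b v -> RInt_is (fun x => k * f x) a b (k * v).
Proof.
  intros [p e].
  assert (pc := RiemannInt_P14 a b 0).
  assert (pr3 : Riemann_integrable (fun x => fct_cte 0 x + k * f x) a b) by (apply RiemannInt_P10; auto).
  apply RInt_ext with (f := fun x => fct_cte 0 x + k * f x).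
  { intros; unfold fct_cte; ring. }
  exists pr3. rewrite (RiemannInt_P13 pc p pr3), RiemannInt_P15, e. ring.
Qed.

Lemma ratio_bound J H eps : 0 < H -> H * (1 - eps) < J -> J < H * (1 + eps) -> Rabs (J / H - 1) < eps.
Proof.
  intros HH H1 H2.
  assert (J / H < 1 + eps). { apply (Rmult_lt_reg_r H); auto. unfold Rdiv; rewrite Rmult_assoc, Rinv_l; lra. }
  assert (1 - eps < J / H). { apply (Rmult_lt_reg_r H); auto. unfold Rdiv; rewrite Rmult_assoc, Rinv_l; lra. }
  apply Rabs_def1; lra.
Qed.

Lemma main_gen (Phi : R -> R -> R) theta F IF :
  0 < theta -> continuity F -> (forall x, 0 <= F x) -> improper_R F IF -> 0 < IF ->
  (forall d, 0 < d -> forall l, -PI <= l <= PI -> continuity_pt (Phi d) l) ->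
  (forall d, 0 < d -> forall l, -PI <= l <= PI -> 0 <= Phi d l <= 1) ->
  (forall M eta, 0 < eta -> exists d0, 0 < d0 /\ forall d, 0 < d -> d < d0 ->
       forall l, -PI <= l <= PI -> -(d*theta*M) <= l <= d*theta*M -> 1 - eta <= Phi d l) ->
  equiv0 (fun d => RInt (fun l => Phi d l * F (l/(d*theta))) (-PI) PI) (fun d => d*theta*IF).
Proof.
  intros Ht HFc HF0 HFi HIF Hc H01 Hlow eps Heps.
  set (e := Rmin (1/2) (eps*IF/(2*(IF+1)))).
  assert (He : 0 < e). { unfold e; apply Rmin_glb_lt; [lra|]. apply Rdiv_lt_0_compat; nra. }
  assert (He1 : e <= 1/2) by apply Rmin_l.
  assert (He2 : e * (2 * (IF + 1)) <= eps * IF).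
  { assert (e <= eps*IF/(2*(IF+1))) by apply Rmin_r.
    apply (Rmult_le_compat_r (2*(IF+1))) in H; [|lra].
    unfold Rdiv in H; rewrite Rmult_assoc, Rinv_l in H; lra. }
  destruct (HFi e He) as [M0 HM0].
  set (M1 := Rabs M0 + 1).
  assert (HM1 : 0 < M1 /\ M0 < M1 /\ - M1 < - M0).
  { unfold M1; pose proof (Rabs_pos M0); pose proof (Rle_abs M0); pose proof (Rle_abs (-M0)); rewrite Rabs_Ropp in *; lra. }
  destruct (HM0 (-M1) M1 ltac:(lra) ltac:(lra)) as [v1 [Hv1 Hv1e]].
  destruct (Hlow M1 e He) as [d0 [Hd0 Hd0']].
  assert (HPI := PI_RGT_0).
  exists (Rmin d0 (PI / (theta * M1))). split.
  { apply Rmin_glb_lt; auto. apply Rdiv_lt_0_compat; nra. }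
  intros d Hd Hdl.
  assert (Hdd0 : d < d0) by (eapply Rlt_le_trans; [exact Hdl| apply Rmin_l]).
  assert (Hdpi : d * theta * M1 < PI).
  { assert (d < PI / (theta * M1)) by (eapply Rlt_le_trans; [exact Hdl| apply Rmin_r]).
    apply (Rmult_lt_compat_r (theta * M1)) in H; [|nra].
    unfold Rdiv in H; rewrite Rmult_assoc, Rinv_l in H; nra. }
  set (h := d * theta). assert (Hh : 0 < h) by (unfold h; nra).
  fold h in Hdpi.
  set (Psi := fun l => Phi d l * F (l/h)).
  assert (HPsi : forall l, -PI <= l <= PI -> continuity_pt Psi l).
  { intros l Hl. unfold Psi. apply (continuity_pt_mult (Phi d) (fun l => F (l/h))).
    apply Hc; auto. apply (continuity_pt_comp (fun l => l/h) F). apply cont_divh; lra. apply HFc. }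
  assert (HPsi0 : forall l, -PI <= l <= PI -> 0 <= Psi l).
  { intros l Hl; unfold Psi. apply Rmult_le_pos; [apply H01; auto | apply HF0]. }
  assert (Rint : forall a b, -PI <= a -> a <= b -> b <= PI -> exists v, RInt_is Psi a b v).
  { intros a b Ha Hab Hb. apply RInt_is_cont; auto. intros; apply HPsi; lra. }
  destruct (Rint (-PI) PI ltac:(lra) ltac:(lra) ltac:(lra)) as [J HJ].
  change (Rabs (RInt Psi (-PI) PI / (h * IF) - 1) < eps).
  rewrite (RInt_eq _ _ _ _ HJ).
  assert (HMpi : M0 < PI / h).
  { apply Rlt_le_trans with M1; [lra|]. apply (Rmult_le_reg_r h); auto. unfold Rdiv; rewrite Rmult_assoc, Rinv_l; nra. }
  assert (HMpi' : (-PI)/h < - M0) by (unfold Rdiv in *; rewrite Ropp_mult_distr_l_reverse; lra).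
  destruct (HM0 ((-PI)/h) (PI/h) HMpi' HMpi) as [v2 [Hv2 Hv2e]].
  pose proof (RInt_cv F h (-PI) PI v2 Hh ltac:(lra) HFc Hv2) as Hv2'.
  assert (Hup : J <= h * v2).
  { eapply RInt_le2; [exact HJ | exact Hv2' |lra |]. intros l Hl. unfold Psi; cbv beta.
    pose proof (H01 d Hd l ltac:(lra)). pose proof (HF0 (l/h)). nra. }
  destruct (Rint (-PI) (-(h*M1)) ltac:(lra) ltac:(nra) ltac:(nra)) as [J1 HJ1].
  destruct (Rint (-(h*M1)) (h*M1) ltac:(nra) ltac:(nra) ltac:(nra)) as [J2 HJ2].
  destruct (Rint (h*M1) PI ltac:(nra) ltac:(nra) ltac:(nra)) as [J3 HJ3].
  assert (HJs : J = J1 + J2 + J3).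
  { eapply RInt_is_unique; [exact HJ|]. eapply RInt_chasles; [eapply RInt_chasles|]; eauto. }
  assert (HJ1p : 0 <= J1).
  { replace 0 with (0 * (-(h*M1) - -PI)) by ring. eapply RInt_le2; [apply RInt_const | exact HJ1 |nra |].
    intros; apply HPsi0; nra. }
  assert (HJ3p : 0 <= J3).
  { replace 0 with (0 * (PI - h*M1)) by ring. eapply RInt_le2; [apply RInt_const | exact HJ3 |nra |].
    intros; apply HPsi0; nra. }
  assert (Hv1' : RInt_is (fun x => (1 - e) * F x) (-(h*M1)/h) ((h*M1)/h) ((1-e)*v1)).
  { replace (-(h*M1)/h) with (-M1) by (field; lra). replace ((h*M1)/h) with M1 by (field; lra).
    apply RInt_scal; auto. }
  pose proof (RInt_cv (fun x => (1 - e) * F x) h (-(h*M1)) (h*M1) ((1-e)*v1) Hh ltac:(nra)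
     ltac:(intro x; apply (continuity_pt_scal F (1-e)); apply HFc) Hv1') as Hv1''.
  assert (Hlo : h * ((1-e)*v1) <= J2).
  { eapply RInt_le2; [exact Hv1'' | exact HJ2 |nra |]. intros l Hl. unfold Psi.
    assert (1 - e <= Phi d l) by (apply Hd0'; auto; unfold h in *; lra).
    pose proof (HF0 (l/h)). nra. }
  apply ratio_bound; [nra| |].
  - apply Rabs_def2 in Hv1e. destruct Hv1e.
    assert (h * ((1 - e) * v1) >= h * ((1-e)*(IF - e))) by (apply Rle_ge; apply Rmult_le_compat_l; nra).
    assert ((1-e)*(IF-e) > IF * (1 - eps)) by nra.
    nra.
  - apply Rabs_def2 in Hv2e. destruct Hv2e.
    assert (h * v2 < h * (IF + e)) by (apply Rmult_lt_compat_l; lra).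
    assert (IF + e < IF * (1 + eps)) by nra.
    nra.
Qed.


Lemma Rpower_pos x y : 0 < Rpower x y.
Proof. unfold Rpower; apply exp_pos. Qed.

Lemma gstar_nonneg nu al w : 0 <= C_nu nu -> 0 <= gstar nu al w.
Proof.
  intros HC; unfold gstar. apply Rmult_le_pos; [apply Rmult_le_pos; auto|]; left; apply Rpower_pos.
Qed.

Lemma gstar_le nu al w : 1/2 <= nu -> 0 <= C_nu nu -> 1 <= w ^ 2 ->
  gstar nu al w <= C_nu nu * Rpower al (2 * nu) / w ^ 2.
Proof.
  intros Hnu HC Hw. unfold gstar, Rdiv.
  apply Rmult_le_compat_l. { apply Rmult_le_pos; auto; left; apply Rpower_pos. }
  assert (H1 : 1 <= al ^ 2 + w ^ 2) by nra.
  apply Rle_trans with (Rpower (al ^ 2 + w ^ 2) (Ropp 1)).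
  { apply Rle_Rpower; lra. }
  rewrite Rpower_Ropp, Rpower_1 by lra.
  apply Rinv_le_contravar; nra.
Qed.

Lemma dlim_ext2 f g x l1 l2 : (forall y, f y = g y) -> l1 = l2 ->
  derivable_pt_lim f x l1 -> derivable_pt_lim g x l2.
Proof. intros H e. replace g with f by (apply functional_extensionality; auto). subst; auto. Qed.

Lemma gstar_deriv nu al c y : 0 < al -> derivable_pt (fun y => gstar nu al (y + c)) y.
Proof.
  intros Hal. unfold gstar.
  set (K := C_nu nu * Rpower al (2 * nu)).
  set (p := - (nu + 1/2)).
  set (z := al ^ 2 + (y + c) ^ 2).
  assert (Hz : 0 < z) by (unfold z; pose proof (pow2_ge_0 (y+c)); pose proof (pow_lt al 2 Hal); lra).
  assert (D1 : derivable_pt_lim (fun y => al ^ 2 + (y + c) ^ 2) y (2 * (y + c))).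
  { eapply dlim_ext2 with (f := (fct_cte (al^2) + (id + fct_cte c) * (id + fct_cte c))%F).
    - intros t; unfold plus_fct, mult_fct, fct_cte, id; ring.
    - shelve.
    - apply derivable_pt_lim_plus. apply derivable_pt_lim_const.
      apply derivable_pt_lim_mult; apply derivable_pt_lim_plus; try apply derivable_pt_lim_id; apply derivable_pt_lim_const.
    Unshelve. unfold plus_fct, id, fct_cte; ring. }
  assert (D2 := derivable_pt_lim_power z p Hz).
  assert (D3 := derivable_pt_lim_comp _ _ _ _ _ D1 D2).
  assert (D4 := derivable_pt_lim_scal _ K _ _ D3).
  exists (K * (p * Rpower z (p - 1) * (2 * (y + c)))).
  eapply dlim_ext2; [| reflexivity | exact D4]. intros t; reflexivity.
Qed.

Lemma gstar_cont nu al c y : 0 < al -> continuity_pt (fun y => gstar nu al (y + c)) y.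
Proof. intros; apply derivable_continuous_pt, gstar_deriv; auto. Qed.

Definition uterm nu al y (n : nat) :=
  gstar nu al (y + 2 * IZR (Z.of_nat n) * PI) + gstar nu al (y + 2 * IZR (- (Z.of_nat n + 1)) * PI).

Definition Ssum nu al y N := sum_f_R0 (uterm nu al y) N.

Lemma PI_gt2 : 2 < PI.
Proof. pose proof PI2_1; lra. Qed.

Lemma uterm_eq nu al y n : uterm nu al y n =
  gstar nu al (y + 2 * INR n * PI) + gstar nu al (y - 2 * (INR n + 1) * PI).
Proof.
  unfold uterm. rewrite opp_IZR, plus_IZR, <- INR_IZR_INZ.
  f_equal; f_equal; ring.
Qed.

Lemma uterm_nonneg nu al y n : 0 <= C_nu nu -> 0 <= uterm nu al y n.
Proof. intros; unfold uterm; pose proof (gstar_nonneg nu al (y + 2 * IZR (Z.of_nat n) * PI)); pose proof (gstar_nonneg nu al (y + 2 * IZR (- (Z.of_nat n + 1)) * PI)); lra. Qed.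

Lemma uterm_bound nu al y n : 1/2 <= nu -> 0 <= C_nu nu -> Rabs y < 2 * PI -> (2 <= n)%nat ->
  uterm nu al y n <= 2 * (C_nu nu * Rpower al (2 * nu)) * (/ (INR n - 1) - / INR n).
Proof.
  intros Hnu HC Hy Hn. rewrite uterm_eq.
  set (K := C_nu nu * Rpower al (2 * nu)).
  assert (HK : 0 <= K) by (unfold K; apply Rmult_le_pos; auto; left; apply Rpower_pos).
  set (x := INR n).
  assert (Hx : 2 <= x) by (unfold x; replace 2 with (INR 2) by (simpl; ring); apply le_INR; auto).
  pose proof PI_gt2. apply Rabs_def2 in Hy. destruct Hy as [Hy1 Hy2].
  assert (E : / (x - 1) - / x = / (x * (x - 1))) by (field; lra).
  rewrite E.
  assert (Hxx : 1 <= x * (x - 1)) by nra.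
  assert (W : forall w, x * (x - 1) <= w ^ 2 -> gstar nu al w <= K * / (x * (x - 1))).
  { intros w Hw. eapply Rle_trans. apply gstar_le; auto; lra.
    fold K. unfold Rdiv. apply Rmult_le_compat_l; auto. apply Rinv_le_contravar; lra. }
  assert (W1 : x * (x - 1) <= (y + 2 * x * PI) ^ 2).
  { assert (4 * (x - 1) <= y + 2 * x * PI) by nra. nra. }
  assert (W2 : x * (x - 1) <= (y - 2 * (x + 1) * PI) ^ 2).
  { assert (y - 2 * (x + 1) * PI <= - (4 * x)) by nra. nra. }
  pose proof (W _ W1). pose proof (W _ W2). lra.
Qed.

Lemma Ssum_S nu al y N : Ssum nu al y (S N) = Ssum nu al y N + uterm nu al y (S N).
Proof. reflexivity. Qed.

Lemma Ssum_tail nu al y N k : 1/2 <= nu -> 0 <= C_nu nu -> Rabs y < 2 * PI -> (1 <= N)%nat ->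
  0 <= Ssum nu al y (N + k) - Ssum nu al y N <=
  2 * (C_nu nu * Rpower al (2 * nu)) * (/ INR N - / INR (N + k)).
Proof.
  intros Hnu HC Hy HN. induction k.
  - rewrite Nat.add_0_r. split; lra.
  - replace (N + S k)%nat with (S (N + k)) by lia. rewrite Ssum_S.
    pose proof (uterm_nonneg nu al y (S (N + k)) HC).
    pose proof (uterm_bound nu al y (S (N + k)) Hnu HC Hy ltac:(lia)).
    rewrite S_INR in H0. replace (INR (N + k) + 1 - 1) with (INR (N + k)) in H0 by ring.
    rewrite S_INR. lra.
Qed.

Lemma lim_bounds U l N a b : Un_cv U l -> (forall m, (N <= m)%nat -> a <= U m <= b) -> a <= l <= b.
Proof.
  intros Hc Hb. split.
  - destruct (Rle_lt_dec a l) as [|Hl]; auto. exfalso.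
    destruct (Hc (a - l) ltac:(lra)) as [N1 HN1].
    specialize (HN1 (max N N1) (Nat.le_max_r _ _)). specialize (Hb (max N N1) (Nat.le_max_l _ _)).
    unfold Rdist in HN1. apply Rabs_def2 in HN1. lra.
  - destruct (Rle_lt_dec l b) as [|Hl]; auto. exfalso.
    destruct (Hc (l - b) ltac:(lra)) as [N1 HN1].
    specialize (HN1 (max N N1) (Nat.le_max_r _ _)). specialize (Hb (max N N1) (Nat.le_max_l _ _)).
    unfold Rdist in HN1. apply Rabs_def2 in HN1. lra.
Qed.

Lemma INR_inv_le N M : (1 <= N)%nat -> (N <= M)%nat -> / INR M <= / INR N.
Proof.
  intros. apply Rinv_le_contravar. apply lt_0_INR; lia. apply le_INR; auto.
Qed.

Lemma Ssum_cv nu al y : 1/2 <= nu -> 0 <= C_nu nu -> Rabs y < 2 * PI ->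
  { l | Un_cv (Ssum nu al y) l }.
Proof.
  intros Hnu HC Hy. apply R_complete. intros eps Heps.
  set (K := C_nu nu * Rpower al (2 * nu)).
  assert (HK : 0 <= K) by (unfold K; apply Rmult_le_pos; auto; left; apply Rpower_pos).
  destruct (archimed_cor1 (eps / (2 * K + 1))) as [N [HN1 HN2]].
  { apply Rdiv_lt_0_compat; lra. }
  assert (HNpos : 0 < INR N) by (apply lt_0_INR; lia).
  assert (Hk : 2 * K * / INR N < eps).
  { assert (/ INR N * (2 * K + 1) < eps).
    { apply (Rmult_lt_compat_r (2*K+1)) in HN1; [|lra]. unfold Rdiv in HN1.
      rewrite Rmult_assoc, Rinv_l in HN1; lra. }
    assert (0 < / INR N) by (apply Rinv_0_lt_compat; auto). nra. }
  exists N. intros n m Hn Hm. unfold Rdist.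
  assert (T : forall p, (N <= p)%nat -> 0 <= Ssum nu al y p - Ssum nu al y N <= 2 * K * / INR N).
  { intros p Hp. replace p with (N + (p - N))%nat by lia.
    pose proof (Ssum_tail nu al y N (p - N) Hnu HC Hy ltac:(lia)). fold K in H.
    pose proof (INR_inv_le N (N + (p - N)) ltac:(lia) ltac:(lia)).
    assert (0 < / INR (N + (p - N))) by (apply Rinv_0_lt_compat, lt_0_INR; lia). nra. }
  pose proof (T n Hn). pose proof (T m Hm). apply Rabs_def1; lra.
Qed.

Lemma gdelta_spec nu d theta y : 1/2 <= nu -> 0 <= C_nu nu -> Rabs y < 2 * PI ->
  forall N, (1 <= N)%nat ->
  Ssum nu (d * theta) y N <= gdelta nu d theta y <=
  Ssum nu (d * theta) y N + 2 * (C_nu nu * Rpower (d * theta) (2 * nu)) * / INR N.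
Proof.
  intros Hnu HC Hy N HN.
  destruct (Ssum_cv nu (d * theta) y Hnu HC Hy) as [l Hl].
  assert (E : gdelta nu d theta y = l).
  { unfold gdelta, zsum.
    assert (Hs : infinite_sum (uterm nu (d * theta) y) l) by exact Hl.
    pose proof (epsilon_spec (inhabits 0)
      (fun l => infinite_sum (fun n => (fun k => gstar nu (d * theta) (y + 2 * IZR k * PI)) (Z.of_nat n)
          + (fun k => gstar nu (d * theta) (y + 2 * IZR k * PI)) (- (Z.of_nat n + 1))%Z) l)
      (ex_intro _ l Hs)) as H.
    eapply uniqueness_sum; [exact H| exact Hs]. }
  rewrite E.
  set (K := C_nu nu * Rpower (d * theta) (2 * nu)).
  apply (lim_bounds _ _ N _ _ Hl). intros m Hm.
  replace m with (N + (m - N))%nat by lia.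
  pose proof (Ssum_tail nu (d * theta) y N (m - N) Hnu HC Hy HN). fold K in H.
  assert (HK : 0 <= K) by (unfold K; apply Rmult_le_pos; auto; left; apply Rpower_pos).
  assert (0 < / INR (N + (m - N))) by (apply Rinv_0_lt_compat, lt_0_INR; lia). nra.
Qed.

Lemma gdelta_ge nu d theta y : 1/2 <= nu -> 0 <= C_nu nu -> Rabs y < 2 * PI ->
  gstar nu (d * theta) y <= gdelta nu d theta y.
Proof.
  intros Hnu HC Hy. destruct (gdelta_spec nu d theta y Hnu HC Hy 1 (le_n 1)) as [H _].
  eapply Rle_trans; [|exact H]. rewrite Ssum_S. unfold Ssum. simpl sum_f_R0.
  pose proof (uterm_nonneg nu (d*theta) y 1 HC).
  unfold uterm at 1. simpl Z.of_nat.
  replace (y + 2 * IZR 0 * PI) with y by ring.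
  pose proof (gstar_nonneg nu (d*theta) (y + 2 * IZR (- (0 + 1)) * PI) HC). lra.
Qed.

Lemma Ssum_cont nu al y N : 0 < al -> continuity_pt (fun y => Ssum nu al y N) y.
Proof.
  intros Hal. induction N.
  - unfold Ssum, uterm; simpl sum_f_R0.
    apply (continuity_pt_plus (fun y => gstar nu al (y + 2 * IZR (Z.of_nat 0) * PI))
                              (fun y => gstar nu al (y + 2 * IZR (- (Z.of_nat 0 + 1)) * PI)));
    apply gstar_cont; auto.
  - apply (continuity_pt_plus (fun y => Ssum nu al y N) (fun y => uterm nu al y (S N))); auto.
    unfold uterm.
    apply (continuity_pt_plus (fun y => gstar nu al (y + 2 * IZR (Z.of_nat (S N)) * PI))
                              (fun y => gstar nu al (y + 2 * IZR (- (Z.of_nat (S N) + 1)) * PI)));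
    apply gstar_cont; auto.
Qed.

Lemma gdelta_cont nu d theta y : 1/2 <= nu -> 0 <= C_nu nu -> 0 < d * theta -> Rabs y < 2 * PI ->
  continuity_pt (gdelta nu d theta) y.
Proof.
  intros Hnu HC Hal Hy.
  assert (Hr : 0 < 2 * PI) by (pose proof PI_RGT_0; lra).
  set (r := mkposreal _ Hr).
  apply (CVU_continuity (fun N y => Ssum nu (d * theta) y N) _ 0 r).
  - intros eps Heps.
    set (K := C_nu nu * Rpower (d * theta) (2 * nu)).
    assert (HK : 0 <= K) by (unfold K; apply Rmult_le_pos; auto; left; apply Rpower_pos).
    destruct (archimed_cor1 (eps / (2 * K + 1))) as [N [HN1 HN2]].
    { apply Rdiv_lt_0_compat; lra. }
    assert (Hk : 2 * K * / INR N < eps).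
    { assert (/ INR N * (2 * K + 1) < eps).
      { apply (Rmult_lt_compat_r (2*K+1)) in HN1; [|lra]. unfold Rdiv in HN1.
        rewrite Rmult_assoc, Rinv_l in HN1; lra. }
      assert (0 < / INR N) by (apply Rinv_0_lt_compat, lt_0_INR; lia). nra. }
    exists N. intros n z Hn Hz. unfold Boule in Hz; simpl in Hz. rewrite Rminus_0_r in Hz.
    destruct (gdelta_spec nu d theta z Hnu HC Hz n ltac:(lia)) as [H1 H2]. fold K in H2.
    pose proof (INR_inv_le N n ltac:(lia) Hn).
    apply Rabs_def1; nra.
  - intros n z _. apply Ssum_cont; auto.
  - unfold Boule; simpl. rewrite Rminus_0_r; auto.
Qed.

Lemma gstar_lower nu h M l : 0 < h -> 0 < nu -> 0 <= C_nu nu -> Rabs l <= h * M ->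
  C_nu nu * Rpower (1 + M ^ 2) (- (nu + 1/2)) / h <= gstar nu h l.
Proof.
  intros Hh Hnu HC Hl. unfold gstar.
  set (p := nu + 1/2).
  assert (HM : 0 <= M) by (pose proof (Rabs_pos l); nra).
  assert (Hl2 : l ^ 2 <= h ^ 2 * M ^ 2).
  { rewrite <- pow2_abs. pose proof (Rabs_pos l). nra. }
  assert (H1 : Rpower (h ^ 2 * (1 + M ^ 2)) (- p) <= Rpower (h ^ 2 + l ^ 2) (- p)).
  { rewrite !Rpower_Ropp. apply Rinv_le_contravar. apply Rpower_pos.
    apply Rle_Rpower_l. unfold p; lra. split; [pose proof (pow2_ge_0 l); pose proof (pow_lt h 2 Hh); lra| nra]. }
  assert (H2 : Rpower (h ^ 2 * (1 + M ^ 2)) (- p) = Rpower h (2 * - p) * Rpower (1 + M ^ 2) (- p)).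
  { rewrite <- Rpower_mult_distr; [| pose proof (pow_lt h 2 Hh); lra | pose proof (pow2_ge_0 M); lra].
    f_equal. rewrite <- (Rpower_pow 2 h Hh), Rpower_mult. f_equal; try (simpl; ring). }
  assert (H3 : Rpower h (2 * nu) * Rpower h (2 * - p) = / h).
  { rewrite <- Rpower_plus. replace (2 * nu + 2 * - p) with (Ropp 1) by (unfold p; field).
    rewrite Rpower_Ropp, Rpower_1; auto. }
  apply Rle_trans with (C_nu nu * Rpower h (2 * nu) * Rpower (h ^ 2 * (1 + M ^ 2)) (- p)).
  - rewrite H2. replace (C_nu nu * Rpower h (2 * nu) * (Rpower h (2 * - p) * Rpower (1 + M ^ 2) (- p)))
      with (C_nu nu * Rpower (1 + M ^ 2) (- p) * (Rpower h (2 * nu) * Rpower h (2 * - p))) by ring.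
    rewrite H3. right; reflexivity.
  - apply Rmult_le_compat_l; auto. apply Rmult_le_pos; auto; left; apply Rpower_pos.
Qed.


Lemma adelta_01 nu b d theta l : 1/2 <= nu -> 0 < b -> 0 <= C_nu nu -> 0 < d * theta -> -PI <= l <= PI ->
  0 <= adelta nu b d theta l <= 1 /\ continuity_pt (adelta nu b d theta) l.
Proof.
  intros Hnu Hb HC Hh Hl.
  assert (Hy : Rabs l < 2 * PI) by (pose proof PI_RGT_0; apply Rabs_def1; lra).
  assert (Hg : 0 <= gdelta nu d theta l).
  { apply Rle_trans with (gstar nu (d*theta) l); [apply gstar_nonneg; auto| apply gdelta_ge; auto]. }
  assert (Hc : 0 < / (2 * PI)) by (apply Rinv_0_lt_compat; pose proof PI_RGT_0; lra).
  unfold adelta. split.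
  - set (G := b * gdelta nu d theta l). assert (0 <= G) by (unfold G; nra).
    split. unfold Rdiv; apply Rmult_le_pos; [lra| left; apply Rinv_0_lt_compat; lra].
    unfold Rdiv. apply (Rmult_le_reg_r (G + / (2 * PI))); [lra|].
    rewrite Rmult_assoc, Rinv_l; lra.
  - assert (Cg := gdelta_cont nu d theta l Hnu HC Hh Hy).
    assert (Cbg : continuity_pt (fun y => b * gdelta nu d theta y) l).
    { exact (continuity_pt_scal _ b l Cg). }
    assert (Cden : continuity_pt (fun y => b * gdelta nu d theta y + / (2 * PI)) l).
    { exact (continuity_pt_plus _ (fct_cte (/ (2 * PI))) l Cbg (continuity_pt_const (fct_cte (/ (2 * PI))) l (fun x y => eq_refl))). }
    exact (continuity_pt_div _ _ l Cbg Cden ltac:(cbv beta; nra)).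
Qed.

Lemma adelta_low nu b theta M eta : 1/2 <= nu -> 0 < b -> 0 < C_nu nu -> 0 < theta -> 0 < eta ->
  exists d0, 0 < d0 /\ forall d, 0 < d -> d < d0 ->
     forall l, -(d*theta*M) <= l <= d*theta*M -> 1 - eta <= adelta nu b d theta l.
Proof.
  intros Hnu Hb HC Ht He.
  set (M' := Rabs M).
  set (K := C_nu nu * Rpower (1 + M' ^ 2) (- (nu + 1/2))).
  assert (HK : 0 < K) by (unfold K; apply Rmult_lt_0_compat; auto; apply Rpower_pos).
  assert (HPI := PI_RGT_0).
  set (c := / (2 * PI)). assert (Hc : 0 < c) by (apply Rinv_0_lt_compat; lra).
  assert (HM' : 0 <= M') by apply Rabs_pos.
  exists (Rmin (PI / (theta * (M' + 1))) (eta * b * K / (c * theta))). split.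
  { apply Rmin_glb_lt; apply Rdiv_lt_0_compat; try nra. apply Rmult_lt_0_compat; nra. }
  intros d Hd Hdl l Hl.
  set (h := d * theta). assert (Hh : 0 < h) by (unfold h; nra).
  assert (Hlh : Rabs l <= h * M').
  { apply Rabs_le. pose proof (Rle_abs M). pose proof (Rle_abs (-M)). rewrite Rabs_Ropp in *.
    fold M' in H, H0. assert (h * M <= h * M') by (apply Rmult_le_compat_l; lra).
    assert (h * (- M) <= h * M') by (apply Rmult_le_compat_l; lra).
    unfold h in *. split; nra. }
  assert (Hd1 : d < PI / (theta * (M' + 1))) by (eapply Rlt_le_trans; [exact Hdl| apply Rmin_l]).
  assert (Hd2 : d < eta * b * K / (c * theta)) by (eapply Rlt_le_trans; [exact Hdl| apply Rmin_r]).
  assert (Hy : Rabs l < 2 * PI).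
  { apply (Rmult_lt_compat_r (theta * (M' + 1))) in Hd1; [|nra].
    unfold Rdiv in Hd1. rewrite Rmult_assoc, Rinv_l in Hd1; [|nra]. unfold h in Hlh. nra. }
  assert (Hg := gdelta_ge nu d theta l Hnu ltac:(lra) Hy).
  assert (Hgl := gstar_lower nu h M' l Hh ltac:(lra) ltac:(lra) Hlh).
  replace (M' ^ 2) with (M' ^ 2) in Hgl by reflexivity. fold K in Hgl. fold h in Hg.
  assert (Hh2 : h * (c * theta) < eta * b * K * theta).
  { unfold h. apply (Rmult_lt_compat_r (c * theta)) in Hd2; [|nra].
    unfold Rdiv in Hd2. rewrite Rmult_assoc, Rinv_l in Hd2; nra. }
  assert (Hh3 : h * c < eta * b * K) by nra.
  set (G := b * gdelta nu d theta l).
  assert (HG : b * (K / h) <= G) by (unfold G; apply Rmult_le_compat_l; lra).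
  assert (HG2 : c < eta * G).
  { assert (b * (K / h) * h = b * K) by (field; lra).
    assert (c * h < eta * (b * (K / h)) * h) by nra.
    apply Rmult_lt_reg_r in H0; auto. nra. }
  unfold adelta. fold G. fold c.
  assert (0 < G) by nra.
  replace (G / (G + c)) with (1 - c / (G + c)) by (field; lra).
  assert (c / (G + c) <= eta).
  { unfold Rdiv. apply (Rmult_le_reg_r (G + c)); [lra|]. rewrite Rmult_assoc, Rinv_l; nra. }
  lra.
Qed.


Lemma exp_le' a c : a <= c -> exp a <= exp c.
Proof. intros [H|H]; [left; apply exp_increasing; auto| subst; lra]. Qed.

Lemma ln_ge0 t : 1 <= t -> 0 <= ln t.
Proof. intros [H|H]; [left; rewrite <- ln_1; apply ln_increasing; lra | subst; rewrite ln_1; lra]. Qed.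

Lemma ln_le_sub1 u : 0 < u -> ln u <= u - 1.
Proof. intros Hu. pose proof (exp_ineq1_le (ln u)). rewrite exp_ln in H; lra. Qed.

Lemma Rpower_1_l y : Rpower 1 y = 1.
Proof. unfold Rpower. rewrite ln_1, Rmult_0_r, exp_0. reflexivity. Qed.

Lemma dl_expc c t : derivable_pt_lim (fun t => exp (c * t)) t (c * exp (c * t)).
Proof.
  eapply dlim_ext with (f := comp exp (mult_real_fct c id)).
  - intros; reflexivity.
  - shelve.
  - apply derivable_pt_lim_comp. apply derivable_pt_lim_scal, derivable_pt_lim_id. apply derivable_pt_lim_exp.
  Unshelve. unfold mult_real_fct, id; ring.
Qed.

Lemma cont_expc c t : continuity_pt (fun t => exp (c * t)) t.
Proof. apply derivable_continuous_pt. exists (c * exp (c * t)). apply dl_expc. Qed.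

Lemma cont_Rpow y t : 0 < t -> continuity_pt (fun t => Rpower t y) t.
Proof. intros. apply derivable_continuous_pt. exists (y * Rpower t (y - 1)). apply derivable_pt_lim_power; auto. Qed.

Definition gf (x t : R) := Rpower t (x - 1) * exp (- t).

Lemma gf_cont x t : 0 < t -> continuity_pt (gf x) t.
Proof.
  intros Ht. unfold gf.
  assert (C2 : continuity_pt (fun t => exp (- t)) t).
  { eapply continuity_pt_locally_ext with (a := 1) (f := fun t => exp ((-1) * t)); [lra| |apply cont_expc].
    intros; f_equal; ring. }
  exact (continuity_pt_mult _ _ t (cont_Rpow (x - 1) t Ht) C2).
Qed.

Lemma gf_pos x t : 0 < gf x t.
Proof. unfold gf. apply Rmult_lt_0_compat; [unfold Rpower|]; apply exp_pos. Qed.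

Lemma gf_int x a b : 0 < a -> a <= b -> exists v, RInt_is (gf x) a b v.
Proof. intros. apply RInt_is_cont; auto. intros; apply gf_cont; lra. Qed.

Lemma FTC_pow x a : 0 < x -> 0 < a <= 1 -> RInt_is (fun t => Rpower t (x - 1)) a 1 ((1 - Rpower a x) / x).
Proof.
  intros Hx Ha.
  replace ((1 - Rpower a x) / x) with (Rpower 1 x / x - Rpower a x / x) by (rewrite Rpower_1_l; field; lra).
  apply (FTC_loc _ (fun t => Rpower t x / x)); [lra| |].
  - intros t Ht. apply cont_Rpow; lra.
  - split; [|lra]. intros t Ht.
    assert (D : derivable_pt_lim (fun t => Rpower t x / x) t (Rpower t (x - 1))).
    { eapply dlim_ext with (f := mult_real_fct (/ x) (fun t => Rpower t x)).
      - intros; unfold mult_real_fct, Rdiv; ring.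
      - shelve.
      - apply derivable_pt_lim_scal, derivable_pt_lim_power; lra.
      Unshelve. field; lra. }
    exists (exist _ _ D). reflexivity.
Qed.

Lemma FTC_exp b : 1 <= b -> RInt_is (fun t => exp (-(1/2) * t)) 1 b (2 * (exp (-(1/2) * 1) - exp (-(1/2) * b))).
Proof.
  intros Hb.
  replace (2 * (exp (-(1/2) * 1) - exp (-(1/2) * b))) with ((-2) * exp (-(1/2) * b) - (-2) * exp (-(1/2) * 1)) by ring.
  apply (FTC_loc _ (fun t => (-2) * exp (-(1/2) * t))); [lra| |].
  - intros t _. apply cont_expc.
  - split; [|lra]. intros t Ht.
    assert (D : derivable_pt_lim (fun t => (-2) * exp (-(1/2) * t)) t (exp (-(1/2) * t))).
    { eapply dlim_ext with (f := mult_real_fct (-2) (fun t => exp (-(1/2) * t))).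
      - intros; reflexivity.
      - shelve.
      - apply derivable_pt_lim_scal, dl_expc.
      Unshelve. field. }
    exists (exist _ _ D). reflexivity.
Qed.

Lemma gf_le_pow x t : 0 < t -> gf x t <= Rpower t (x - 1).
Proof.
  intros Ht. unfold gf. assert (exp (- t) <= 1) by (rewrite <- exp_0; apply exp_le'; lra).
  assert (0 < Rpower t (x - 1)) by (unfold Rpower; apply exp_pos). nra.
Qed.

Definition Kq (x : R) := let q := Rabs (x - 1) + 1 in exp (q * ln (2 * q) - q).

Lemma gf_le_exp x t : 1 <= t -> gf x t <= Kq x * exp (-(1/2) * t).
Proof.
  intros Ht. unfold gf, Kq, Rpower. set (q := Rabs (x - 1) + 1).
  assert (Hq : 1 <= q) by (unfold q; pose proof (Rabs_pos (x - 1)); lra).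
  rewrite <- !exp_plus. apply exp_le'.
  assert (Hl : 0 <= ln t) by (apply ln_ge0; auto).
  assert (H1 : (x - 1) * ln t <= q * ln t).
  { apply Rmult_le_compat_r; auto. unfold q; pose proof (Rle_abs (x - 1)); lra. }
  assert (H2 : ln (t / (2 * q)) <= t / (2 * q) - 1) by (apply ln_le_sub1; apply Rdiv_lt_0_compat; lra).
  unfold Rdiv in H2. rewrite ln_mult, ln_Rinv in H2 by (try apply Rinv_0_lt_compat; lra).
  assert (H3 : q * ln t <= q * ln (2 * q) + q * (t * / (2 * q)) - q) by nra.
  replace (q * (t * / (2 * q))) with (t / 2) in H3 by (field; lra).
  lra.
Qed.

Lemma A_bound x a v : 0 < x -> 0 < a <= 1 -> RInt_is (gf x) a 1 v -> v <= / x.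
Proof.
  intros Hx Ha Hv. pose proof (FTC_pow x a Hx Ha).
  apply Rle_trans with ((1 - Rpower a x) / x).
  - eapply RInt_le2; [exact Hv | exact H | lra |]. intros; apply gf_le_pow; lra.
  - assert (0 < Rpower a x) by (unfold Rpower; apply exp_pos).
    assert (0 < / x) by (apply Rinv_0_lt_compat; lra).
    unfold Rdiv. nra.
Qed.

Lemma B_bound x b v : 1 <= b -> RInt_is (gf x) 1 b v -> v <= 2 * Kq x.
Proof.
  intros Hb Hv. pose proof (RInt_scal _ _ _ (Kq x) _ (FTC_exp b Hb)) as H.
  apply Rle_trans with (Kq x * (2 * (exp (-(1/2) * 1) - exp (-(1/2) * b)))).
  - eapply RInt_le2; [exact Hv | exact H | lra |]. intros; apply gf_le_exp; lra.
  - assert (exp (-(1/2) * 1) <= 1) by (apply Rle_trans with (exp 0); [apply exp_le'; lra | rewrite exp_0; lra]).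
    assert (0 < exp (-(1/2) * b)) by apply exp_pos.
    assert (0 < Kq x) by (unfold Kq; apply exp_pos). nra.
Qed.

Lemma gf_int_nonneg x a b v : 0 < a -> a <= b -> RInt_is (gf x) a b v -> 0 <= v.
Proof.
  intros Ha Hab Hv. replace 0 with (0 * (b - a)) by ring.
  eapply RInt_le2; [apply RInt_const | exact Hv | lra |]. intros; left; apply gf_pos.
Qed.

Lemma gf_mono_l x a c d v w : 0 < a -> a <= c -> c <= d -> RInt_is (gf x) a d v -> RInt_is (gf x) c d w -> w <= v.
Proof.
  intros Ha Hac Hcd Hv Hw. destruct (gf_int x a c Ha Hac) as [u Hu].
  pose proof (RInt_chasles _ _ _ _ _ _ Hu Hw). rewrite (RInt_is_unique _ _ _ _ _ Hv H).
  pose proof (gf_int_nonneg x a c u Ha Hac Hu). lra.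
Qed.

Lemma gf_mono_r x c b1 b2 v w : 0 < c -> c <= b1 -> b1 <= b2 -> RInt_is (gf x) c b2 v -> RInt_is (gf x) c b1 w -> w <= v.
Proof.
  intros Hc H1 H2 Hv Hw. destruct (gf_int x b1 b2 ltac:(lra) H2) as [u Hu].
  pose proof (RInt_chasles _ _ _ _ _ _ Hw Hu). rewrite (RInt_is_unique _ _ _ _ _ Hv H).
  pose proof (gf_int_nonneg x b1 b2 u ltac:(lra) H2 Hu). lra.
Qed.

Lemma gamma_exists x : 0 < x -> exists l, improper_0_inf (gf x) l.
Proof.
  intros Hx.
  set (EA := fun y => exists a, 0 < a <= 1 /\ RInt_is (gf x) a 1 y).
  set (EB := fun y => exists b, 1 <= b /\ RInt_is (gf x) 1 b y).
  assert (bA : bound EA).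
  { exists (/ x). intros y [a [Ha Hy]]. eapply A_bound; eauto. }
  assert (bB : bound EB).
  { exists (2 * Kq x). intros y [b [Hb Hy]]. eapply B_bound; eauto. }
  assert (nA : exists y, EA y).
  { destruct (gf_int x 1 1 ltac:(lra) ltac:(lra)) as [v Hv]. exists v, 1. split; auto; lra. }
  assert (nB : exists y, EB y).
  { destruct (gf_int x 1 1 ltac:(lra) ltac:(lra)) as [v Hv]. exists v, 1. split; auto; lra. }
  destruct (completeness EA bA nA) as [LA [HA1 HA2]].
  destruct (completeness EB bB nB) as [LB [HB1 HB2]].
  exists (LA + LB). intros eps Heps.
  assert (WA : exists a0 v0, 0 < a0 <= 1 /\ RInt_is (gf x) a0 1 v0 /\ LA - eps/2 < v0).
  { destruct (classic (exists a0 v0, 0 < a0 <= 1 /\ RInt_is (gf x) a0 1 v0 /\ LA - eps/2 < v0)) as [H|H]; auto.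
    exfalso. assert (is_upper_bound EA (LA - eps/2)).
    { intros y [a [Ha Hy]]. destruct (Rle_lt_dec y (LA - eps/2)); auto. exfalso; apply H; eauto. }
    apply HA2 in H0. lra. }
  assert (WB : exists b0 v0, 1 <= b0 /\ RInt_is (gf x) 1 b0 v0 /\ LB - eps/2 < v0).
  { destruct (classic (exists b0 v0, 1 <= b0 /\ RInt_is (gf x) 1 b0 v0 /\ LB - eps/2 < v0)) as [H|H]; auto.
    exfalso. assert (is_upper_bound EB (LB - eps/2)).
    { intros y [b [Hb Hy]]. destruct (Rle_lt_dec y (LB - eps/2)); auto. exfalso; apply H; eauto. }
    apply HB2 in H0. lra. }
  destruct WA as [a0 [va0 [Ha0 [Hva0 Hva0']]]].
  destruct WB as [b0 [vb0 [Hb0 [Hvb0 Hvb0']]]].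
  exists a0. split; [lra|]. exists b0. intros a b Ha Hab Hb.
  destruct (gf_int x a 1 Ha ltac:(lra)) as [va Hva].
  destruct (gf_int x 1 b ltac:(lra) ltac:(lra)) as [vb Hvb].
  exists (va + vb). split; [eapply RInt_chasles; eauto|].
  assert (va0 <= va) by (eapply (gf_mono_l x a a0 1); eauto; lra).
  assert (vb0 <= vb) by (eapply (gf_mono_r x 1 b0 b); eauto; lra).
  assert (va <= LA) by (apply HA1; exists a; split; auto; lra).
  assert (vb <= LB) by (apply HB1; exists b; split; auto; lra).
  apply Rabs_def1; lra.
Qed.

Lemma improper_pos x l : improper_0_inf (gf x) l -> 0 < l.
Proof.
  intros H.
  set (m := exp (- (Rabs (x - 1)) * ln 2 - 2)).
  assert (Hm : 0 < m) by apply exp_pos.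
  assert (Hlow : forall t, 1 <= t <= 2 -> m <= gf x t).
  { intros t Ht. unfold gf, m, Rpower. rewrite <- exp_plus. apply exp_le'.
    assert (0 <= ln t) by (apply ln_ge0; lra).
    assert (ln t <= ln 2).
    { destruct (Rle_lt_or_eq_dec t 2 ltac:(lra)) as [Hlt|Heq]; [left; apply ln_increasing; lra| subst; lra]. }
    assert (- (Rabs (x - 1)) * ln 2 <= (x - 1) * ln t).
    { pose proof (Rle_abs (x - 1)). pose proof (Rle_abs (-(x - 1))). rewrite Rabs_Ropp in *.
      pose proof (Rabs_pos (x - 1)). nra. }
    lra. }
  destruct (H (m/2) ltac:(lra)) as [m0 [Hm0 [M HM]]].
  set (a := Rmin (m0/2) (1/2)).
  assert (Ha : 0 < a /\ a < m0 /\ a <= 1/2).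
  { unfold a; split; [apply Rmin_glb_lt; lra| split; [eapply Rle_lt_trans; [apply Rmin_l| lra] | apply Rmin_r]]. }
  set (b := Rmax M 2 + 1).
  assert (Hb : M < b /\ 2 <= b) by (unfold b; pose proof (Rmax_l M 2); pose proof (Rmax_r M 2); lra).
  destruct (HM a b ltac:(lra) ltac:(lra) ltac:(lra)) as [v [Hv Hve]].
  assert (m <= v).
  { destruct (gf_int x 1 2 ltac:(lra) ltac:(lra)) as [u Hu].
    assert (m * (2 - 1) <= u) by (eapply RInt_le2; [apply RInt_const | exact Hu | lra |]; intros; apply Hlow; lra).
    destruct (gf_int x a 1 ltac:(lra) ltac:(lra)) as [u1 Hu1].
    destruct (gf_int x 2 b ltac:(lra) ltac:(lra)) as [u3 Hu3].
    pose proof (RInt_chasles _ _ _ _ _ _ (RInt_chasles _ _ _ _ _ _ Hu1 Hu) Hu3).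
    rewrite (RInt_is_unique _ _ _ _ _ Hv H1).
    pose proof (gf_int_nonneg x a 1 u1 ltac:(lra) ltac:(lra) Hu1).
    pose proof (gf_int_nonneg x 2 b u3 ltac:(lra) ltac:(lra) Hu3). lra. }
  apply Rabs_def2 in Hve. lra.
Qed.

Lemma Gamma_pos x : 0 < x -> 0 < Gamma x.
Proof.
  intros Hx. destruct (gamma_exists x Hx) as [l Hl].
  apply (improper_pos x). unfold Gamma.
  exact (epsilon_spec (inhabits 0) (fun l => improper_0_inf (gf x) l) (ex_intro _ l Hl)).
Qed.

Lemma C_nu_pos nu : 0 < nu -> 0 < C_nu nu.
Proof.
  intros Hnu. unfold C_nu. apply Rdiv_lt_0_compat. apply Gamma_pos; lra.
  apply Rmult_lt_0_compat. apply sqrt_lt_R0, PI_RGT_0. apply Gamma_pos; lra.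
Qed.


Lemma final_thm (nu b theta : R) (F : R -> R) (IF : R)
  (Hnu : 1/2 < nu) (Hb : 0 < b) (Htheta : 0 < theta)
  (HFc : continuity F) (HFpos : forall x, 0 <= F x)
  (HFint : improper_R F IF) (HIF : 0 < IF) (HC : 0 < C_nu nu) :
  equiv0
    (fun delta => RInt (fun lam => adelta nu b delta theta lam * F (lam / (delta * theta))) (- PI) PI)
    (fun delta => delta * theta * IF)
  /\
  equiv0
    (fun delta => RInt (fun lam => (adelta nu b delta theta lam) ^ 2 * F (lam / (delta * theta))) (- PI) PI)
    (fun delta => delta * theta * IF).
Proof.
  split.
  - apply (main_gen (fun d l => adelta nu b d theta l) theta F IF); auto.
    + intros d Hd l Hl. apply (adelta_01 nu b d theta l); auto; lra || nra.
    + intros d Hd l Hl. apply (adelta_01 nu b d theta l); auto; lra || nra.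
    + intros M eta He. destruct (adelta_low nu b theta M eta) as [d0 [Hd0 H]]; auto; try lra.
      exists d0; split; auto.
  - apply (main_gen (fun d l => (adelta nu b d theta l) ^ 2) theta F IF); auto.
    + intros d Hd l Hl. destruct (adelta_01 nu b d theta l) as [_ Hc]; try lra; try nra.
      replace (fun l => adelta nu b d theta l ^ 2) with (fun l => adelta nu b d theta l * adelta nu b d theta l)
        by (apply functional_extensionality; intros; ring).
      exact (continuity_pt_mult _ _ l Hc Hc).
    + intros d Hd l Hl. destruct (adelta_01 nu b d theta l) as [H _]; try lra; try nra.
    + intros M eta He. destruct (adelta_low nu b theta M (eta/2)) as [d0 [Hd0 H]]; auto; try lra.
      exists d0; split; auto. intros d Hd Hdd l Hl Hl'.
      specialize (H d Hd Hdd l Hl').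
      assert (Hdt : 0 < d * theta) by nra.
      destruct (adelta_01 nu b d theta l) as [H2 _]; try lra.
      nra.
Qed.


Theorem lemma5p3 (nu b theta : R) (F : R -> R) (IF : R)
  (Hnu : 1/2 < nu) (Hb : 0 < b) (Htheta : 0 < theta)
  (HFc : continuity F) (HFpos : forall x, 0 <= F x)
  (HFint : improper_R F IF) (HIF : 0 < IF) :
  equiv0
    (fun delta => RInt (fun lam => adelta nu b delta theta lam * F (lam / (delta * theta))) (- PI) PI)
    (fun delta => delta * theta * IF)
  /\
  equiv0
    (fun delta => RInt (fun lam => (adelta nu b delta theta lam) ^ 2 * F (lam / (delta * theta))) (- PI) PI)
    (fun delta => delta * theta * IF).
Proof.
  apply final_thm; auto. apply C_nu_pos. lra.
Qed.
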